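(* Let $(\mathcal{X},c)$ be a metric space with diameter at most $1$, let $\mu,\nu$ be probability distributions on $\mathcal{X}$, and let $p\ge1$, $k>0$, $\delta'>0$. Suppose that for every $\alpha\in[0,1]$ a value $\overline W_{p,\alpha}(\mu,\nu)$ is given with $W_{p,\alpha}(\mu,\nu)\le\overline W_{p,\alpha}(\mu,\nu)\le W_{p,\alpha}(\mu,\nu)+\delta'$, and define $\overline{\mathrm{RPW}}_{p,k}(\mu,\nu)=\inf\{\varepsilon\in[0,1]: \overline W_{p,1-\varepsilon}(\mu,\nu)\le k\varepsilon\}$. Then $$\mathrm{RPW}_{p,k}(\mu,\nu)\le\overline{\mathrm{RPW}}_{p,k}(\mu,\nu)\le\mathrm{RPW}_{p,k}(\mu,\nu)+\tfrac{2\delta'}{k}.$$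
   Context: $c(x,y)\le1$ for all $x,y$; distributions are Borel probability measures. For $p\in[1,\infty)$ and $\alpha\in[0,1]$, a partial transport plan of mass $\alpha$ between $\mu,\nu$ is a nonnegative measure $\gamma$ on $\mathcal{X}\times\mathcal{X}$ of total mass $\alpha$ with first marginal $\le\mu$ and second marginal $\le\nu$ (setwise); its cost is $w_p(\gamma)=(\int c^p\,d\gamma)^{1/p}$, and $W_{p,\alpha}(\mu,\nu)$ is the infimum of $w_p(\gamma)$ over such $\gamma$. For $k\ge0$, $\mathrm{RPW}_{p,k}(\mu,\nu)=\inf\{\varepsilon\in[0,1]: W_{p,1-\varepsilon}(\mu,\nu)\le k\varepsilon\}$. *)

(* Defs.v *)
From HB Require Import structures.
From mathcomp Require Import all_boot all_order all_algebra.
From mathcomp Require Import all_classical all_reals all_analysis.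
Set Implicit Arguments. Unset Strict Implicit. Unset Printing Implicit Defensive.
Import Order.TTheory GRing.Theory Num.Theory.
Local Open Scope classical_set_scope.
Local Open Scope ring_scope.

Section RPW.
Context {d : measure_display} {X : measurableType d} {R : realType}.

Definition is_metric (c : X -> X -> R) : Prop :=
  (forall x y, c x y = 0 <-> x = y) /\
  (forall x y, c x y = c y x) /\
  (forall x y z, c x z <= c x y + c y z).

Definition metric_open (c : X -> X -> R) (A : set X) : Prop :=
  forall x, A x -> exists r : R, 0 < r /\ [set y | c x y < r] `<=` A.

Definition borel_wrt (c : X -> X -> R) : Prop :=
  (@measurable _ X) = <<s metric_open c >>.

Definition partial_plan (mu nu : probability X R) (alpha : R)
    (g : {measure set (X * X)%type -> \bar R}) : Prop :=
  g setT = alpha%:E /\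
  (forall A, measurable A -> g (A `*` setT) <= mu A)%E /\
  (forall B, measurable B -> g (setT `*` B) <= nu B)%E.

Definition plan_cost (c : X -> X -> R) (p : R)
    (g : {measure set (X * X)%type -> \bar R}) : R :=
  (fine (\int[g]_z ((c z.1 z.2) `^ p)%:E)) `^ p^-1.

Definition Wpa (c : X -> X -> R) (p alpha : R) (mu nu : probability X R) : R :=
  inf [set plan_cost c p g | g in [set g | partial_plan mu nu alpha g]].

(* inf { eps in [0,1] : W (1 - eps) <= k eps }, the infimum being taken in the
   complete lattice [0,1] (so the infimum of the empty set is 1). *)
Definition rpw_of (W : R -> R) (k : R) : R :=
  inf ([set e | 0 <= e <= 1 /\ W (1 - e) <= k * e] `|` [set 1]).

Definition RPW (c : X -> X -> R) (p k : R) (mu nu : probability X R) : R :=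
  rpw_of (fun a => Wpa c p a mu nu) k.

End RPW.

(* Main.v *)
Require Import Defs.
From HB Require Import structures.
From mathcomp Require Import all_boot all_order all_algebra.
From mathcomp Require Import all_classical all_reals all_analysis.
From mathcomp Require Import measurable_realfun lra.
Import Order.TTheory GRing.Theory Num.Theory.
Local Open Scope classical_set_scope.
Local Open Scope ring_scope.

Section aux.
Context {d : measure_display} {T : measurableType d} {R : realType}.
Import HBNNSimple.

Lemma integral_mscaleT (t : {nonneg R}) (g : {measure set T -> \bar R}) (f : T -> \bar R) :
  (forall x, (0 <= f x)%E) ->
  (\int[mscale t g]_(x in setT) f x = t%:num%:E * \int[g]_(x in setT) f x)%E.
Proof.
move=> f0; rewrite !ge0_integralTE//.
rewrite -ereal_supZl//; last first.
  apply/set0P; exists (sintegral g (@nnsfun0 _ T R)); exists nnsfun0 => //.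
congr ereal_sup; rewrite image_comp; apply: eq_imagel => h _ /=.
have E (m : {measure set T -> \bar R}) : sintegral m h = (\int[m]_(x in setT) (h x)%:E)%E.
  by rewrite integral_nnsfun// patch_setT.
rewrite !E ge0_integral_mscale//.
- by apply: measurableT_comp.
- by move=> x _; rewrite lee_fin.

Qed.
End aux.

Section mono.
Context {d : measure_display} {X : measurableType d} {R : realType}.

Lemma Wpa_mono (c : X -> X -> R) (p a b : R) (mu nu : probability X R) :
  0 <= p -> 0 <= a -> a <= b -> b <= 1 -> Wpa c p a mu nu <= Wpa c p b mu nu.
Proof.
move=> p0 a0 ab b1.
have b0 : 0 <= b by apply: le_trans ab.
have [b_eq0|bpos] := eqVneq b 0.
  have -> : a = b by apply/le_anti; rewrite ab b_eq0 a0.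
  by [].
have bgt0 : 0 < b by rewrite lt0r bpos b0.
have cost_ge0 (g : {measure set (X * X)%type -> \bar R}) : 0 <= plan_cost c p g.
  exact: powR_ge0.
have muT : (mu [set: X] = 1)%E by exact: probability_setT.
have nuT : (nu [set: X] = 1)%E by exact: probability_setT.
apply: lb_le_inf.
  pose P := mscale (NngNum b0) (mu \x nu)%E.
  exists (plan_cost c p P); exists P => //.
  split; [|split].
  - rewrite /P /= /mscale /= -setXTT product_measure1E//.
  have -> : (b%:E * (mu setT * nu setT) = b%:E)%E by rewrite muT nuT !mule1.
  by [].
  - move=> A mA; rewrite /P /= /mscale /= product_measure1E//.
    have -> : (b%:E * (mu A * nu setT) = b%:E * mu A)%E by rewrite nuT mule1.
    by rewrite gee_pMl// lee_fin.
  - move=> B mB; rewrite /P /= /mscale /= product_measure1E//.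
    have -> : (b%:E * (mu setT * nu B) = b%:E * nu B)%E by rewrite muT mul1e.
    by rewrite gee_pMl// lee_fin.
move=> _ [g [gT [gA gB]] <-].
have t0 : 0 <= a / b by rewrite divr_ge0.
have t1 : a / b <= 1 by rewrite ler_pdivrMr// mul1r.
pose G := mscale (NngNum t0) g.
apply: (@le_trans _ _ (plan_cost c p G)).
  apply: ge_inf.
    by exists 0 => _ [h _ <-]; exact: cost_ge0.
  exists G => //; split; [|split].
  - by rewrite /G /= /mscale /= gT -EFinM mulfVK.
  - move=> A mA; rewrite /G /= /mscale /=; apply: le_trans (gA A mA).
    by rewrite gee_pMl// lee_fin.
  - move=> B mB; rewrite /G /= /mscale /=; apply: le_trans (gB B mB).
    by rewrite gee_pMl// lee_fin.
rewrite /plan_cost /G integral_mscaleT /=; last by move=> z; rewrite lee_fin powR_ge0.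
set I := (\int[g]_z _)%E.
have I0 : (0 <= I)%E by apply: integral_ge0 => z _; rewrite lee_fin powR_ge0.
apply: ge0_ler_powR.
- by rewrite invr_ge0.
- by rewrite nnegrE fine_ge0// mule_ge0.
- by rewrite nnegrE fine_ge0.
move: I0; case: I => [r| |] //= r0.
- by rewrite ler_piMl.
- have [->|tpos] := eqVneq (a / b) 0; first by rewrite mul0e.
  by rewrite gt0_muley// lte_fin lt0r tpos t0.
Qed.
End mono.

Theorem lemmaA4 (d : measure_display) (X : measurableType d) (R : realType)
  (c : X -> X -> R) (hc : is_metric c) (hdiam : forall x y, c x y <= 1)
  (hborel : borel_wrt c)
  (mu nu : probability X R) (p k d' : R)
  (hp : 1 <= p) (hk : 0 < k) (hd' : 0 < d')
  (Wbar : R -> R)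
  (hW : forall alpha, 0 <= alpha <= 1 ->
     Wpa c p alpha mu nu <= Wbar alpha <= Wpa c p alpha mu nu + d') :
  RPW c p k mu nu <= rpw_of Wbar k <= RPW c p k mu nu + 2 * d' / k.
Proof.
have p0 : 0 <= p by apply: le_trans hp.
pose S (f : R -> R) := [set e | 0 <= e <= 1 /\ f (1 - e) <= k * e] `|` [set 1].
have Sne f : S f !=set0 by exists 1; right.
have Slb f : has_lbound (S f).
  by exists 0 => e [[/andP[e0 _] _]|->].
have rpwE f : rpw_of f k = inf (S f) by [].
have Sle1 f : rpw_of f k <= 1 by rewrite rpwE; apply: ge_inf => //; right.
rewrite /RPW !rpwE.
set W := fun a => Wpa c p a mu nu.
apply/andP; split.
  apply: lb_le_inf => // e [[/andP[e0 e1] He]|->]; apply: ge_inf => //; [left|right] => //.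
  split; first by rewrite e0 e1.
  have /andP[h1 _] := hW (1 - e) ltac:(apply/andP; split; lra).
  exact: le_trans h1 He.
set q := d' / k.
have q0 : 0 < q by rewrite divr_gt0.
have -> : 2 * d' / k = 2 * q by rewrite /q mulrA.
have hlt : inf (S W) < inf (S W) + q by rewrite ltrDl.
have [e Se elt] := inf_lt (Sne W) hlt.
have [e1|e1] := leP 1 (e + q).
  by apply: le_trans (Sle1 Wbar) _; lra.
case: Se => [[/andP[e0 e1'] He]|]; last by move=> /= ee; lra.
apply: (@le_trans _ _ (e + q)); last by lra.
apply: ge_inf => //; left; split.
  by apply/andP; split; lra.
have /andP[_ h2] := hW (1 - (e + q)) ltac:(apply/andP; split; lra).
apply: le_trans h2 _.
have hm : W (1 - (e + q)) <= W (1 - e).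
  apply: Wpa_mono => //; lra.
have kq : k * q = d' by rewrite /q mulrC divfK // gt_eqF.
rewrite mulrDr kq; rewrite /W in hm He; lra.
Qed.
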